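(* Let $S$ be a nonempty complete lattice and let $F:S\to 2^S$ be a lower V-ascending correspondence such that for every $x\in S$, the value $F(x)$ is nonempty and chain-subcomplete downwards in $S$. Then $F$ has a least fixed point, i.e. the set $\{s\in S:s\in F(s)\}$ is nonempty and has a least element.
   Context: A poset $S$ is a complete lattice if every nonempty subset has a supremum and infimum in $S$. A subset $T\subset S$ is chain-subcomplete downwards in $S$ if for every nonempty chain $C\subset T$, $\inf_S C$ exists and belongs to $T$. A correspondence $F:S\to 2^S$ on a lattice $S$ is lower V-ascending if for all $x<x'$ in $S$ (strict inequality), every $y\in F(x)$ and every $y'\in F(x')$, one has $y\wedge y'\in F(x)$. *)

(* Defs.v *)
From mathcomp Require Import all_boot all_order.
Set Implicit Arguments. Unset Strict Implicit. Unset Printing Implicit Defensive.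
Import Order.TTheory.
Local Open Scope order_scope.

Section Defs.
Context {d : Order.disp_t} {T : latticeType d}.

Definition nonempty (A : T -> Prop) : Prop := exists x, A x.

Definition is_lower_bound (A : T -> Prop) (m : T) : Prop := forall a, A a -> m <= a.
Definition is_upper_bound (A : T -> Prop) (m : T) : Prop := forall a, A a -> a <= m.

Definition is_inf (A : T -> Prop) (m : T) : Prop :=
  is_lower_bound A m /\ forall l, is_lower_bound A l -> l <= m.
Definition is_sup (A : T -> Prop) (m : T) : Prop :=
  is_upper_bound A m /\ forall u, is_upper_bound A u -> m <= u.

Definition complete_lattice : Prop :=
  forall A : T -> Prop, nonempty A -> (exists s, is_sup A s) /\ (exists i, is_inf A i).

Definition is_chain (C : T -> Prop) : Prop :=
  forall a b, C a -> C b -> a <= b \/ b <= a.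

Definition chain_subcomplete_down (X : T -> Prop) : Prop :=
  forall C : T -> Prop, nonempty C -> is_chain C -> (forall c, C c -> X c) ->
    exists m, is_inf C m /\ X m.

(* F x y means y \in F(x) *)
Definition lower_V_ascending (F : T -> T -> Prop) : Prop :=
  forall x x' y y', x < x' -> F x y -> F x' y' -> F x (y `&` y').

End Defs.

(* Main.v *)
Require Import Defs.
From mathcomp Require Import all_boot all_order.
From mathcomp Require classical_sets boolp.
From Stdlib Require Import Classical.
Import Order.TTheory.
Local Open Scope order_scope.

Lemma minimal_ex (d : Order.disp_t) (T : latticeType d) (X : T -> Prop) :
  nonempty X -> chain_subcomplete_down X ->
  exists m, X m /\ forall z, X z -> z <= m -> z = m.
Proof.
move=> [x0 Xx0] Hc.
pose T' := {z : T | X z}.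
pose R := fun a b : T' => proj1_sig b <= proj1_sig a.
have [t Ht] : exists t : T', forall s : T', R t s -> s = t.
  apply: (@classical_sets.Zorn T' R).
  - by move=> t; rewrite /R.
  - by move=> r s t; rewrite /R => h1 h2; exact: le_trans h2 h1.
  - move=> s t; rewrite /R => h1 h2; apply: eq_sig_hprop.
      by move=> *; apply: boolp.Prop_irrelevance.
    by apply/eqP; rewrite eq_le h1 h2.
  - move=> A Htot.
    case: (classic (exists a, A a)) => [[a Aa]|nA]; last first.
      exists (exist _ x0 Xx0) => s As; exfalso; apply: nA; by exists s.
    pose C := fun c => exists a, A a /\ proj1_sig a = c.
    have [|||m [[lb _] Xm]] := Hc C.
    + by exists (proj1_sig a); exists a.
    + move=> c1 c2 [a1 [A1 <-]] [a2 [A2 <-]].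
      by case: (Htot a1 a2 A1 A2) => h; [right|left].
    + by move=> c [a1 [_ <-]]; exact: proj2_sig.
    exists (exist _ m Xm) => s As; rewrite /R /=.
    by apply: lb; exists s.
exists (proj1_sig t); split; first exact: proj2_sig.
move=> z Xz zt.
have := Ht (exist _ z Xz) zt.
by move=> /(f_equal (@proj1_sig _ _)).
Qed.

Theorem lemma2p9 (d : Order.disp_t) (T : latticeType d) (F : T -> T -> Prop) :
  (exists x : T, True) ->
  complete_lattice (T := T) ->
  lower_V_ascending F ->
  (forall x, nonempty (F x)) ->
  (forall x, chain_subcomplete_down (F x)) ->
  exists s, F s s /\ (forall t, F t t -> s <= t).
Proof.
move=> [x0 _] Hcl Hv Hne Hcs.
have [[top [ubt _]] _] := Hcl (fun _ => True) (ex_intro _ x0 I).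
pose A := fun x => exists y, F x y /\ y <= x.
have [_ [s [lbs glbs]]] : (exists s, is_sup A s) /\ (exists i, is_inf A i).
  apply: Hcl; have [y Fy] := Hne top; exists top; exists y; split => //.
  exact: ubt.
have As : A s.
  apply: NNPP => nAs.
  have [m0 [Fm0 min0]] := @minimal_ex _ _ _ (Hne s) (Hcs s).
  apply: (nAs); exists m0; split => //.
  apply: glbs => x Ax.
  have sx : s < x.
    rewrite lt_neqAle lbs // andbT; apply/eqP => esx; apply: (nAs).
    by rewrite esx.
  have [y' [Fy' y'x]] := Ax.
  have := Hv _ _ _ _ sx Fm0 Fy'.
  move=> Fmy; have := min0 _ Fmy (leIl _ _).
  move=> e; apply: le_trans y'x; rewrite -e; exact: leIr.
have [m [Fm ms]] := As.
have em : m = s.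
  apply: NNPP => ne.
  have lt : m < s by rewrite lt_neqAle ms andbT; apply/eqP.
  have [y Fy] := Hne m.
  have Am : A m by exists (y `&` m); split; [exact: Hv lt Fy Fm | exact: leIr].
  have sm := lbs _ Am.
  by apply: ne; apply/eqP; rewrite eq_le ms sm.
exists s; split; first by rewrite -{2}em.
by move=> t Ft; apply: lbs; exists t.
Qed.
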